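(* Consider a finite super-modular game with player set $\mathcal V$ and binary action sets $\{\pm1\}$. Then: (i) the maps $f^+,f^-,g^+,g^-:\mathcal X\to\mathcal X$ are monotone nondecreasing (i.e., $x\le y$ implies $f^\pm(x)\le f^\pm(y)$ and $g^\pm(x)\le g^\pm(y)$); (ii) a configuration $x$ is an equilibrium if and only if $f^+(x)=x=f^-(x)$; (iii) a configuration $x$ is a strict equilibrium if and only if $g^+(x)=x=g^-(x)$.
   Context: Game: finite player set $\mathcal V$, each player has action set $\{-1,+1\}$, configurations $x\in\mathcal X=\{-1,+1\}^{\mathcal V}$, utilities $u_i:\mathcal X\to\mathbb R$; write $u_i(x)=u_i(x_i,x_{-i})$. Best response: $\mathcal B_i(x_{-i})=\arg\max_{x_i\in\{\pm1\}}u_i(x_i,x_{-i})$. An equilibrium is $x^*$ with $x_i^*\in\mathcal B_i(x^*_{-i})$ for all $i$; it is strict if $\mathcal B_i(x^*_{-i})=\{x^*_i\}$ for all $i$. The game is super-modular if for every $i$, $u_i(1,x_{-i})-u_i(-1,x_{-i})\ge u_i(1,y_{-i})-u_i(-1,y_{-i})$ whenever $x_{-i}\ge y_{-i}$ (componentwise order). $\bigvee L,\bigwedge L$ denote entrywise max and min of a set $L$. Paths: a length-$l$ admissible path from $x$ to $y$ is $(x^{(0)},\dots,x^{(l)})$ with $x^{(0)}=x$, $x^{(l)}=y$, and for each $k$ a player $i_k$ with $x^{(k)}_{-i_k}=x^{(k-1)}_{-i_k}$ and $x^{(k)}_{i_k}\ne x^{(k-1)}_{i_k}$ (length $0$ allowed).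 It is an I-path if $u_{i_k}(x^{(k)})>u_{i_k}(x^{(k-1)})$ for all $k$, a BR-path if $u_{i_k}(x^{(k)})\ge u_{i_k}(x^{(k-1)})$ for all $k$; monotone if $x^{(0)}\lneq\cdots\lneq x^{(l)}$, anti-monotone if $x^{(0)}\gneq\cdots\gneq x^{(l)}$. Maps: $f^+(x)=\bigvee\{y: y$ reachable from $x$ by a monotone I-path$\}$, $f^-(x)=\bigwedge\{y: y$ reachable from $x$ by an anti-monotone I-path$\}$, $g^+(x)=\bigvee\{y: y$ reachable from $x$ by a monotone BR-path$\}$, $g^-(x)=\bigwedge\{y: y$ reachable from $x$ by an anti-monotone BR-path$\}$. *)

(* Defs.v *)
From HB Require Import structures.
From mathcomp Require Import all_boot all_order all_algebra.
From mathcomp Require Import reals.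
Set Implicit Arguments. Unset Strict Implicit. Unset Printing Implicit Defensive.
Import Order.TTheory GRing.Theory Num.Theory.
Local Open Scope ring_scope.

(* Action set {-1,+1} encoded by bool: false = -1, true = +1
   (so the order -1 < +1 is false < true). *)
Definition config (V : finType) := {ffun V -> bool}.

Section Game.
Variables (V : finType) (R : realType) (u : V -> config V -> R).

Definition cfg_le (x y : config V) : bool := [forall j, x j ==> y j].
Definition cfg_lt (x y : config V) : bool := cfg_le x y && (x != y).

Definition upd (x : config V) (i : V) (b : bool) : config V :=
  [ffun j => if j == i then b else x j].

Definition supermodular : Prop :=
  forall (i : V) (x y : config V),
    (forall j, j != i -> y j ==> x j) ->
    u i (upd y i true) - u i (upd y i false)
      <= u i (upd x i true) - u i (upd x i false).

Definition BR (i : V) (x : config V) : {set bool} :=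
  [set b | [forall b' : bool, u i (upd x i b') <= u i (upd x i b)]].

Definition equilibrium (x : config V) : Prop := forall i, x i \in BR i x.
Definition strict_equilibrium (x : config V) : Prop := forall i, BR i x = [set x i].

Definition adm_step (i : V) (a b : config V) : bool :=
  [forall j, (j != i) ==> (b j == a j)] && (b i != a i).

Definition I_step (a b : config V) : bool :=
  [exists i, adm_step i a b && (u i a < u i b)].
Definition BR_step (a b : config V) : bool :=
  [exists i, adm_step i a b && (u i a <= u i b)].

(* reachability by paths (of any length >= 0): connect is the
   reflexive-transitive closure, i.e. existence of a path in the relation *)
Definition mono_I_reach (x y : config V) : bool :=
  connect (fun a b => I_step a b && cfg_lt a b) x y.
Definition anti_I_reach (x y : config V) : bool :=
  connect (fun a b => I_step a b && cfg_lt b a) x y.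
Definition mono_BR_reach (x y : config V) : bool :=
  connect (fun a b => BR_step a b && cfg_lt a b) x y.
Definition anti_BR_reach (x y : config V) : bool :=
  connect (fun a b => BR_step a b && cfg_lt b a) x y.

Definition cfg_join (L : pred (config V)) : config V :=
  [ffun i => [exists y, L y && y i]].
Definition cfg_meet (L : pred (config V)) : config V :=
  [ffun i => [forall y, L y ==> y i]].

Definition f_plus (x : config V) := cfg_join (mono_I_reach x).
Definition f_minus (x : config V) := cfg_meet (anti_I_reach x).
Definition g_plus (x : config V) := cfg_join (mono_BR_reach x).
Definition g_minus (x : config V) := cfg_meet (anti_BR_reach x).

End Game.

(* Main.v *)
Require Import Defs.
From HB Require Import structures.
From mathcomp Require Import all_boot all_order all_algebra.
From mathcomp Require Import reals.
From mathcomp Require Import lra.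
Set Implicit Arguments. Unset Strict Implicit. Unset Printing Implicit Defensive.
Import Order.TTheory GRing.Theory Num.Theory.
Local Open Scope ring_scope.

Section Gen.
Variables (V : finType) (R : realType) (u : V -> config V -> R).
Hypothesis hsm : supermodular u.
Variable r : R -> R -> bool.
Hypothesis hr : forall a b c d, r a b -> b - a <= d - c -> r c d.

Definition stp (a b : config V) : bool :=
  [exists i, adm_step i a b && r (u i a) (u i b)].
Definition mrel (a b : config V) := stp a b && cfg_lt a b.
Definition arel (a b : config V) := stp a b && cfg_lt b a.

Lemma updE (x : config V) i b j : upd x i b j = if j == i then b else x j.
Proof. by rewrite ffunE. Qed.

Lemma upd_id (x : config V) i : upd x i (x i) = x.
Proof. by apply/ffunP=> j; rewrite updE; case: eqP => // ->. Qed.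

Lemma bool_cases (b c : bool) : b != c -> b = ~~ c.
Proof. by case: b; case: c. Qed.

Lemma adm_upd (x : config V) i b : b != x i -> adm_step i x (upd x i b).
Proof.
move=> ne; apply/andP; split; last by rewrite updE eqxx.
by apply/forallP=> j; apply/implyP=> nj; rewrite updE (negbTE nj).
Qed.

Lemma upd_neq (x : config V) i b : b != x i -> upd x i b != x.
Proof.
move=> ne; apply/eqP=> e; move: (congr1 (fun f : config V => f i) e).
by rewrite /= updE eqxx => h; rewrite h eqxx in ne.
Qed.

Lemma le_upd (x y : config V) i b : cfg_le x y -> cfg_le (upd x i b) (upd y i b).
Proof.
move=> /forallP H; apply/forallP=> j; rewrite !updE; case: (j == i) => //.
by rewrite implybb.
Qed.

Lemma le_updl (x y : config V) i b : cfg_le x y -> (b ==> y i) -> cfg_le (upd x i b) y.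
Proof.
move=> /forallP H hb; apply/forallP=> j; rewrite !updE; case: eqP => [->|_] //.
Qed.

Lemma le_updr (x y : config V) i b : cfg_le x y -> (x i ==> b) -> cfg_le x (upd y i b).
Proof.
move=> /forallP H hb; apply/forallP=> j; rewrite !updE; case: eqP => [->|_] //.
Qed.

Lemma mstep_mk (x : config V) i : x i = false -> r (u i x) (u i (upd x i true)) ->
  mrel x (upd x i true).
Proof.
move=> xi hri; apply/andP; split.
  by apply/existsP; exists i; rewrite hri adm_upd // xi.
rewrite /cfg_lt eq_sym upd_neq ?xi // andbT.
by apply: le_updr; rewrite ?xi //; apply/forallP=> j; rewrite implybb.
Qed.

Lemma astep_mk (x : config V) i : x i = true -> r (u i x) (u i (upd x i false)) ->
  arel x (upd x i false).
Proof.
move=> xi hri; apply/andP; split.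
  by apply/existsP; exists i; rewrite hri adm_upd // xi.
rewrite /cfg_lt upd_neq ?xi // andbT.
by apply: le_updl; rewrite ?xi //; apply/forallP=> j; rewrite implybb.
Qed.

Lemma step_inv (a b : config V) : stp a b ->
  exists i, [/\ b = upd a i (~~ a i), b i = ~~ a i & r (u i a) (u i b)].
Proof.
case/existsP=> i /andP [/andP [/forallP H1 H2] Hr].
have bi : b i = ~~ a i by move: H2; case: (b i); case: (a i).
exists i; split => //; apply/ffunP=> j; rewrite updE.
case: eqP => [->//|/eqP ne]; exact/eqP/(implyP (H1 j) ne).
Qed.

Lemma mstep_inv (a b : config V) : mrel a b ->
  exists i, [/\ a i = false, b = upd a i true & r (u i a) (u i b)].
Proof.
case/andP=> /step_inv [i [eb bi hri]] /andP [/forallP le _].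
have ai : a i = false by move: (le i); rewrite bi; case: (a i).
by exists i; rewrite ai in eb; split.
Qed.

Lemma astep_inv (a b : config V) : arel a b ->
  exists i, [/\ a i = true, b = upd a i false & r (u i a) (u i b)].
Proof.
case/andP=> /step_inv [i [eb bi hri]] /andP [/forallP le _].
have ai : a i = true by move: (le i); rewrite bi; case: (a i).
by exists i; rewrite ai in eb; split.
Qed.

Lemma up_sim (x y w : config V) : cfg_le x y -> connect mrel x w ->
  exists2 w', connect mrel y w' & cfg_le w w'.
Proof.
move=> lexy /connectP [p]; elim: p x y lexy => [|a p IH] x y lexy /=.
  by move=> _ ->; exists y.
case/andP=> st pth ew; case/mstep_inv: st => i [xi ea hri]; subst a.
case yi: (y i).
  by apply: (IH (upd x i true) y) => //; apply: (le_updl lexy); rewrite yi.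
have hy : r (u i y) (u i (upd y i true)).
  refine (hr hri _).
  have -> : u i x = u i (upd x i false) by rewrite -xi upd_id.
  have -> : u i y = u i (upd y i false) by rewrite -yi upd_id.
  apply: hsm => j _; exact: (forallP lexy j).
have st' := mstep_mk yi hy.
have [w' c le] := IH _ (upd y i true) (le_upd i true lexy) pth ew.
by exists w' => //; apply: connect_trans (connect1 st') c.
Qed.

Lemma down_sim (x y w : config V) : cfg_le x y -> connect arel y w ->
  exists2 w', connect arel x w' & cfg_le w' w.
Proof.
move=> lexy /connectP [p]; elim: p x y lexy => [|a p IH] x y lexy /=.
  by move=> _ ->; exists x.
case/andP=> st pth ew; case/astep_inv: st => i [yi ea hri]; subst a.
case xi: (x i); last first.
  by apply: (IH x (upd y i false)) => //; apply: (le_updr lexy); rewrite xi.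
have hx : r (u i x) (u i (upd x i false)).
  refine (hr hri _).
  have -> : u i x = u i (upd x i true) by rewrite -xi upd_id.
  have -> : u i y = u i (upd y i true) by rewrite -yi upd_id.
  have := hsm (i := i) (x := y) (y := x) (fun j _ => forallP lexy j).
  lra.
have st' := astep_mk xi hx.
have [w' c le] := IH (upd x i false) _ (le_upd i false lexy) pth ew.
by exists w' => //; apply: connect_trans (connect1 st') c.
Qed.

Lemma join_mono (x y : config V) : cfg_le x y ->
  cfg_le (cfg_join (fun w => connect mrel x w)) (cfg_join (fun w => connect mrel y w)).
Proof.
move=> lexy; apply/forallP => j; rewrite !ffunE; apply/implyP.
case/existsP=> w /andP [c wj]; have [w' c' le] := up_sim lexy c.
by apply/existsP; exists w'; rewrite c' /= (implyP (forallP le j) wj).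
Qed.

Lemma meet_mono (x y : config V) : cfg_le x y ->
  cfg_le (cfg_meet (fun w => connect arel x w)) (cfg_meet (fun w => connect arel y w)).
Proof.
move=> lexy; apply/forallP => j; rewrite !ffunE; apply/implyP => /forallP H.
apply/forallP => w; apply/implyP => c; have [w' c' le] := down_sim lexy c.
exact: (implyP (forallP le j) (implyP (H w') c')).
Qed.

Lemma fix_iff (x : config V) :
  (cfg_join (fun w => connect mrel x w) = x /\ x = cfg_meet (fun w => connect arel x w))
  <-> forall i, ~~ r (u i x) (u i (upd x i (~~ x i))).
Proof.
split.
  move=> [hj hm] i; apply/negP => hri; case xi: (x i).
    rewrite xi /= in hri; have st := astep_mk xi hri.
    move: (congr1 (fun f : config V => f i) hm); rewrite /= ffunE xi.
    move/esym/forallP/(_ (upd x i false)); rewrite (connect1 st) updE eqxx.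
    by [].
  rewrite xi /= in hri; have st := mstep_mk xi hri.
  move: (congr1 (fun f : config V => f i) hj); rewrite /= ffunE xi.
  by move/negbT/existsPn/(_ (upd x i true)); rewrite (connect1 st) updE eqxx.
move=> H.
have nm : forall w, connect mrel x w -> w = x.
  move=> w /connectP [[|a p] /= pth ->] //; case/andP: pth => st _.
  case/mstep_inv: st => i [xi -> hri]; move: (H i); rewrite xi /=.
  by rewrite hri.
have na : forall w, connect arel x w -> w = x.
  move=> w /connectP [[|a p] /= pth ->] //; case/andP: pth => st _.
  case/astep_inv: st => i [xi -> hri]; move: (H i); rewrite xi /=.
  by rewrite hri.
split; apply/ffunP => j; rewrite ffunE.
  apply/idP/idP => [/existsP [w /andP [/nm -> //]] | xj].
  by apply/existsP; exists x; rewrite connect0.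
apply/idP/idP => [xj | /forallP /(_ x)]; last by rewrite connect0.
by apply/forallP => w; apply/implyP => /na ->.
Qed.

End Gen.

Lemma hr_lt (R : realType) (a b c d : R) : a < b -> b - a <= d - c -> c < d.
Proof. move=> h1 h2; lra. Qed.
Lemma hr_le (R : realType) (a b c d : R) : a <= b -> b - a <= d - c -> c <= d.
Proof. move=> h1 h2; lra. Qed.

Theorem lemma6 (V : finType) (R : realType) (u : V -> config V -> R)
    (hsm : supermodular u) :
  (forall x y : config V, cfg_le x y ->
     [/\ cfg_le (f_plus u x) (f_plus u y),
         cfg_le (f_minus u x) (f_minus u y),
         cfg_le (g_plus u x) (g_plus u y) &
         cfg_le (g_minus u x) (g_minus u y)]) /\
  (forall x : config V, equilibrium u x <-> (f_plus u x = x /\ x = f_minus u x)) /\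
  (forall x : config V,
     strict_equilibrium u x <-> (g_plus u x = x /\ x = g_minus u x)).
Proof.
split.
  move=> x y lexy; split.
  - exact: (join_mono hsm (@hr_lt R) lexy).
  - exact: (meet_mono hsm (@hr_lt R) lexy).
  - exact: (join_mono hsm (@hr_le R) lexy).
  - exact: (meet_mono hsm (@hr_le R) lexy).
split=> x.
  rewrite /f_plus /f_minus (fix_iff u (fun a b => a < b) x).
  split.
    move=> H i; rewrite -leNgt; have := H i; rewrite inE upd_id.
    by move/forallP; apply.
  move=> H i; rewrite inE upd_id; apply/forallP => b.
  case: (eqVneq b (x i)) => [->|ne]; first by rewrite upd_id.
  by rewrite (bool_cases ne) leNgt; exact: H.
rewrite /g_plus /g_minus (fix_iff u (fun a b => a <= b) x).
split.
  move=> H i; apply/negP => hle; move/setP: (H i) => /(_ (~~ x i)).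
  rewrite !inE.
  have -> : (~~ x i == x i) = false by case: (x i).
  suff -> : [forall b', u i (upd x i b') <= u i (upd x i (~~ x i))] by [].
  apply/forallP => b; case: (eqVneq b (x i)) => [->|ne]; first by rewrite upd_id.
  by rewrite (bool_cases ne).
move=> H i; apply/setP => b; rewrite !inE.
case: (eqVneq b (x i)) => [->|ne].
  rewrite upd_id ?eqxx; apply/forallP => b'.
  case: (eqVneq b' (x i)) => [->|ne']; first by rewrite upd_id.
  rewrite (bool_cases ne'); have := H i; rewrite -ltNge; exact: ltW.
rewrite (bool_cases ne).
apply/negbTE/forallPn; exists (x i); rewrite upd_id; exact: H i.
Qed.
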